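(* Let $\eta\in(0,1)$ and $\mathcal N_S>0$. For $N_S>0$ and $\xi\in[0,1]$ let $$I(\xi;N_S)=4N_S\left\{\frac{1-\xi}{1-2\eta^2\left(\sqrt{\xi N_S(1+\xi N_S)}-\xi N_S\right)}+\frac{\xi\left[(1-\eta^2)^2+\eta^4\right]}{(1-\eta^2)\left(1+2\xi N_S\eta^2(1-\eta^2)\right)}\right\},$$ and for real $M\ge1$ define the total quantum Fisher information $\mathcal I(M)=\max_{\xi\in[0,1]}M\,I(\xi;\mathcal N_S/M)$. Then the optimal number of probes is either $M=1$ or $M=\infty$, i.e. $\sup_{M\ge1}\mathcal I(M)=\max\{\mathcal I(1),\lim_{M\to\infty}\mathcal I(M)\}$.
   Context: $I(\xi;N_S)$ is the quantum Fisher information for estimating the transmission $\eta$ of a pure-loss (zero-temperature) bosonic channel with one single-mode pure displaced squeezed probe of mean photon number $N_S$, a fraction $\xi$ in squeezing and $1-\xi$ in displacement. Using $M$ independent probes with a total photon budget $\mathcal N_S=MN_S$ gives total quantum Fisher information $M\,I(\xi;\mathcal N_S/M)$; the number of probes is relaxed to a continuous variable $M\ge1$, with $M=\infty$ understood as the limit. *)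

(* Defs.v *)
From HB Require Import structures.
From mathcomp Require Import all_boot all_order all_algebra.
From mathcomp Require Import all_classical all_reals all_analysis.
Set Implicit Arguments. Unset Strict Implicit. Unset Printing Implicit Defensive.
Import Order.TTheory GRing.Theory Num.Theory.
Import numFieldNormedType.Exports.
Local Open Scope classical_set_scope.
Local Open Scope ring_scope.

Definition QFI {R : realType} (eta NS xi : R) : R :=
  4 * NS * ((1 - xi) / (1 - 2 * eta ^+ 2 * (Num.sqrt (xi * NS * (1 + xi * NS)) - xi * NS))
   + xi * ((1 - eta ^+ 2) ^+ 2 + eta ^+ 4)
       / ((1 - eta ^+ 2) * (1 + 2 * xi * NS * eta ^+ 2 * (1 - eta ^+ 2)))).

Definition totalQFI {R : realType} (eta NNS M : R) : R :=
  sup [set M * QFI eta (NNS / M) xi | xi in [set xi : R | 0 <= xi <= 1]].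

(* Main.v *)
Require Import Defs.
From HB Require Import structures.
From mathcomp Require Import all_boot all_order all_algebra.
From mathcomp Require Import all_classical all_reals all_analysis.
From mathcomp Require Import ring lra.
Import Order.TTheory GRing.Theory Num.Theory.
Import numFieldNormedType.Exports.
Local Open Scope classical_set_scope.
Local Open Scope ring_scope.

Definition Afun {R : realType} (eta x : R) : R :=
  1 / (1 - 2 * eta ^+ 2 * (Num.sqrt (x * (1 + x)) - x)).
Definition Bfun {R : realType} (eta x : R) : R :=
  ((1 - eta ^+ 2) ^+ 2 + eta ^+ 4) / ((1 - eta ^+ 2) * (1 + 2 * x * eta ^+ 2 * (1 - eta ^+ 2))).
Definition Pfun {R : realType} (eta x xi : R) : R :=
  (1 - xi) * Afun eta x + xi * Bfun eta x.

Lemma QFI_eq {R : realType} (eta NS xi : R) :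
  QFI eta NS xi = 4 * NS * Pfun eta (xi * NS) xi.
Proof.
rewrite /QFI /Pfun /Afun /Bfun !mulrA mulr1 //.
Qed.

Lemma g_facts {R : realType} (x : R) : 0 <= x ->
  0 <= Num.sqrt (x * (1 + x)) - x /\ Num.sqrt (x * (1 + x)) - x <= 1/2 /\
  Num.sqrt (x * (1 + x)) - x <= Num.sqrt x.
Proof.
move=> x0.
have s0 := sqrtr_ge0 (x * (1 + x)).
have ss : Num.sqrt (x * (1 + x)) ^+ 2 = x * (1 + x) by rewrite sqr_sqrtr // mulr_ge0 // addr_ge0.
have t0 := sqrtr_ge0 x.
have tt : Num.sqrt x ^+ 2 = x by rewrite sqr_sqrtr.
set s := Num.sqrt (x * (1 + x)) in s0 ss *.
set t := Num.sqrt x in t0 tt *.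
split; [|split]; nra.
Qed.
Lemma A_facts {R : realType} (eta x : R) : 0 < eta < 1 -> 0 <= x ->
  1 <= Afun eta x /\ Afun eta x <= 1 + 2 * eta ^+ 2 / (1 - eta ^+ 2) * Num.sqrt x.
Proof.
move=> /andP[e0 e1] x0.
have [w0 [w1 w2]] := @g_facts _ x x0.
rewrite /Afun.
set w := Num.sqrt (x * (1 + x)) - x in w0 w1 w2 *.
set t := Num.sqrt x in w2 *.
have t0 : 0 <= t by apply: sqrtr_ge0.
set e2 := eta ^+ 2.
have e20 : 0 < e2 by rewrite exprn_gt0.
have e21 : e2 < 1 by rewrite /e2 expr_lt1 ?ltW.
set C := 2 * e2 / (1 - e2).
have hC : C * (1 - e2) = 2 * e2 by rewrite /C mulrVK // unitfE; lra.
have C0 : 0 <= C by rewrite /C divr_ge0 //; lra.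
have d0 : 0 < 1 - 2 * e2 * w by nra.
split.
  by rewrite ler_pdivlMr // mul1r; nra.
rewrite ler_pdivrMr //.
have h1 : 2 * e2 * w <= 2 * e2 * t by nra.
have h2 : C * t * (2 * e2 * w) <= C * t * e2 by apply: ler_wpM2l; [nra|nra].
nra.
Qed.

Lemma B_eq {R : realType} (eta x : R) : 0 < eta < 1 -> 0 <= x ->
  Bfun eta x = Bfun eta 0 / (1 + 2 * eta ^+ 2 * (1 - eta ^+ 2) * x).
Proof.
move=> /andP[e0 e1] x0.
have e20 : 0 < eta ^+ 2 by rewrite exprn_gt0.
have e21 : eta ^+ 2 < 1 by rewrite expr_lt1 ?ltW.
have b0 : 0 <= eta ^+ 2 * (1 - eta ^+ 2) by rewrite mulr_ge0 //; lra.
rewrite /Bfun; field.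
idtac.
by apply/andP; split; apply/eqP; nra.
Qed.

Lemma B_facts {R : realType} (eta x : R) : 0 < eta < 1 -> 0 <= x ->
  0 <= Bfun eta x /\ Bfun eta x <= Bfun eta 0 /\
  Bfun eta 0 - Bfun eta x <= Bfun eta 0 * (2 * eta ^+ 2 * (1 - eta ^+ 2)) * x.
Proof.
move=> he x0; have := he; move=> /andP[e0 e1].
have e20 : 0 < eta ^+ 2 by rewrite exprn_gt0.
have e21 : eta ^+ 2 < 1 by rewrite expr_lt1 ?ltW.
have k0 : 0 <= Bfun eta 0.
  rewrite /Bfun divr_ge0 //.
    by rewrite addr_ge0 // ?sqr_ge0 // exprn_ge0 // ltW.
  rewrite mulr_ge0 //; first lra.
  have -> : 1 + 2 * 0 * eta ^+ 2 * (1 - eta ^+ 2) = 1 :> R by ring.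
  lra.
rewrite (@B_eq _ eta x he x0).
set k := Bfun eta 0 in k0 *.
set b := 2 * eta ^+ 2 * (1 - eta ^+ 2).
have b0 : 0 <= b by rewrite /b mulr_ge0 //; lra.
have y1 : 0 < 1 + b * x by nra.
have kbx : 0 <= k * (b * x) by apply: mulr_ge0 => //; apply: mulr_ge0.
split; first by rewrite divr_ge0 //; lra.
split; first by rewrite ler_pdivrMr //; nra.
have -> : k - k / (1 + b * x) = k * (b * x) / (1 + b * x).
  by field; lra.
have bx0 : 0 <= b * x by apply: mulr_ge0.
have := mulr_ge0 kbx bx0.
rewrite ler_pdivrMr //; nra.
Qed.
Lemma P_key {R : realType} (eta x xi xi' : R) : 0 < eta < 1 -> 0 <= x ->
  0 <= xi' -> xi' <= xi -> xi <= 1 ->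
  Pfun eta x xi <= Num.max (Pfun eta x xi') (Bfun eta 0).
Proof.
move=> he x0 h1 h2 h3.
have [A1 _] := @A_facts _ eta x he x0.
have [_ [Bk _]] := @B_facts _ eta x he x0.
rewrite /Pfun le_max.
case: (lerP (Bfun eta x) (Afun eta x)) => hAB.
  by apply/orP; left; nra.
by apply/orP; right; nra.
Qed.

Lemma P_ub {R : realType} (eta x N xi : R) : 0 < eta < 1 -> 0 <= x -> x <= N ->
  0 <= xi <= 1 ->
  Pfun eta x xi <= Num.max 1 (Bfun eta 0) + 2 * eta ^+ 2 / (1 - eta ^+ 2) * Num.sqrt N.
Proof.
move=> he x0 xN /andP[h1 h2].
have [_ A2] := @A_facts _ eta x he x0.
have [_ [Bk _]] := @B_facts _ eta x he x0.
have := he => /andP[e0 e1].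
have e21 : eta ^+ 2 < 1 by rewrite expr_lt1 ?ltW.
have C0 : 0 <= 2 * eta ^+ 2 / (1 - eta ^+ 2).
  by rewrite divr_ge0 // ?mulr_ge0 ?exprn_ge0 ?ltW //; lra.
have st : Num.sqrt x <= Num.sqrt N by rewrite ler_sqrt // (le_trans x0).
have m1 : 1 <= Num.max 1 (Bfun eta 0) by rewrite le_max lexx.
have m2 : Bfun eta 0 <= Num.max 1 (Bfun eta 0) by rewrite le_max lexx orbT.
set C := 2 * eta ^+ 2 / (1 - eta ^+ 2) in C0 A2 *.
have h3 : C * Num.sqrt x <= C * Num.sqrt N by apply: ler_wpM2l.
have h4 : 0 <= C * Num.sqrt x by apply: mulr_ge0 => //; apply: sqrtr_ge0.
rewrite /Pfun; nra.
Qed.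

Lemma P_0 {R : realType} (eta : R) : Pfun eta 0 0 = 1.
Proof.
rewrite /Pfun /Afun !mul0r sqrtr0 !subr0 mulr0 !subr0 addr0 mul1r.
by rewrite divr1.
Qed.

Lemma P_1 {R : realType} (eta x : R) : Pfun eta x 1 = Bfun eta x.
Proof. by rewrite /Pfun subrr mul0r add0r mul1r. Qed.

Lemma elem_eq {R : realType} (eta NNS M xi : R) : 0 < M ->
  M * QFI eta (NNS / M) xi = 4 * NNS * Pfun eta (xi * (NNS / M)) xi.
Proof.
move=> M0; rewrite QFI_eq mulrA; congr (_ * _).
by field; rewrite gt_eqF.
Qed.
Definition hfun {R : realType} (eta NNS M : R) : R :=
  4 * NNS * (2 * eta ^+ 2 / (1 - eta ^+ 2) * Num.sqrt (NNS / M)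
             + Bfun eta 0 * (2 * eta ^+ 2 * (1 - eta ^+ 2)) * (NNS / M)).

Lemma Q_bounds {R : realType} (eta NNS M : R) : 0 < eta < 1 -> 0 < NNS -> 0 < M ->
  has_ubound [set M * QFI eta (NNS / M) xi | xi in [set xi : R | 0 <= xi <= 1]] /\
  4 * NNS * Num.max 1 (Bfun eta 0) - hfun eta NNS M <= totalQFI eta NNS M /\
  totalQFI eta NNS M <= 4 * NNS * Num.max 1 (Bfun eta 0) + hfun eta NNS M.
Proof.
move=> he N0 M0.
have := he => /andP[e0 e1].
have e21 : eta ^+ 2 < 1 by rewrite expr_lt1 ?ltW.
have e20 : 0 < eta ^+ 2 by rewrite exprn_gt0.
have NM0 : 0 < NNS / M by rewrite divr_gt0.
have [_ [_ Bd]] := @B_facts _ eta (NNS / M) he (ltW NM0).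
have C0 : 0 <= 2 * eta ^+ 2 / (1 - eta ^+ 2).
  by rewrite divr_ge0 // ?mulr_ge0 ?exprn_ge0 ?ltW //; lra.
have k0 : 0 <= Bfun eta 0 by have [] := @B_facts _ eta 0 he (lexx 0).
have b0 : 0 <= 2 * eta ^+ 2 * (1 - eta ^+ 2) by apply: mulr_ge0; lra.
have s0 := sqrtr_ge0 (NNS / M).
have t1 : 0 <= 2 * eta ^+ 2 / (1 - eta ^+ 2) * Num.sqrt (NNS / M) by apply: mulr_ge0.
have t2 : 0 <= Bfun eta 0 * (2 * eta ^+ 2 * (1 - eta ^+ 2)) * (NNS / M).
  by apply: mulr_ge0; [apply: mulr_ge0|apply: ltW].
set S := [set M * QFI eta (NNS / M) xi | xi in [set xi : R | 0 <= xi <= 1]].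
have ubS : ubound S (4 * NNS * Num.max 1 (Bfun eta 0) + hfun eta NNS M).
  move=> y [xi /andP[x0 x1] <-].
  rewrite elem_eq //.
  have hx : 0 <= xi * (NNS / M) by apply: mulr_ge0 => //; apply: ltW.
  have hxN : xi * (NNS / M) <= NNS / M by rewrite ler_piMl // ltW.
  have := @P_ub _ eta (xi * (NNS / M)) (NNS / M) xi he hx hxN (introT andP (conj x0 x1)).
  rewrite /hfun => hP.
  have N4 : 0 < 4 * NNS by rewrite mulr_gt0.
  rewrite -mulrDr ler_pM2l //; lra.
have hasS : has_ubound S by exists (4 * NNS * Num.max 1 (Bfun eta 0) + hfun eta NNS M).
have in0 : S (4 * NNS) by exists 0; [rewrite /= lexx ler01 | rewrite elem_eq // mul0r P_0 mulr1].
have in1 : S (4 * NNS * Bfun eta (NNS / M)).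
  by exists 1; [rewrite /= ler01 lexx | rewrite elem_eq // mul1r P_1].
split => //; split; last by apply: ge_sup => //; exists (4 * NNS).
have le0 := ub_le_sup hasS in0.
have le1 := ub_le_sup hasS in1.
rewrite /totalQFI -/S /hfun.
have N4 : 0 < 4 * NNS by rewrite mulr_gt0.
rewrite /Num.max /=; case: (ltrP 1 (Bfun eta 0)) => hk.
  have : 4 * NNS * (Bfun eta 0 - Bfun eta (NNS / M)) <=
     4 * NNS * (Bfun eta 0 * (2 * eta ^+ 2 * (1 - eta ^+ 2)) * (NNS / M)).
    by rewrite ler_pM2l.
  nra.
have : 0 <= 4 * NNS * (2 * eta ^+ 2 / (1 - eta ^+ 2) * Num.sqrt (NNS / M)) by apply: mulr_ge0; lra.
have : 0 <= 4 * NNS * (Bfun eta 0 * (2 * eta ^+ 2 * (1 - eta ^+ 2)) * (NNS / M)) by apply: mulr_ge0; lra.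
nra.
Qed.
Lemma h_cvg {R : realType} (eta NNS : R) : hfun eta NNS M @[M --> +oo] --> 0.
Proof.
have hV : (fun M : R => M^-1) @ +oo --> 0.
  have H0 : \forall x \near (+oo : set_system R), 0 < (fun x : R => x) x.
    by exists 0; split => // x.
  by apply/(@gtr0_cvgV0 R R _ _ (fun x : R => x) H0); exact: cvg_id.
have hN : (fun M : R => NNS / M) @ +oo --> 0.
  by rewrite -(mulr0 NNS); apply: cvgM => //; exact: cvg_cst.
have hs : (fun M : R => Num.sqrt (NNS / M)) @ +oo --> 0.
  rewrite -sqrtr0; apply: (cvg_comp _ _ hN); exact: sqrt_continuous.
have hA : (fun M : R => 2 * eta ^+ 2 / (1 - eta ^+ 2) * Num.sqrt (NNS / M)) @ +oo
   --> 2 * eta ^+ 2 / (1 - eta ^+ 2) * 0.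
  by apply: cvgM => //; exact: cvg_cst.
have hB : (fun M : R => Bfun eta 0 * (2 * eta ^+ 2 * (1 - eta ^+ 2)) * (NNS / M)) @ +oo
   --> Bfun eta 0 * (2 * eta ^+ 2 * (1 - eta ^+ 2)) * 0.
  by apply: cvgM => //; exact: cvg_cst.
have H : hfun eta NNS M @[M --> +oo] --> 4 * NNS * (2 * eta ^+ 2 / (1 - eta ^+ 2) * 0
   + Bfun eta 0 * (2 * eta ^+ 2 * (1 - eta ^+ 2)) * 0).
  rewrite /hfun; apply: cvgM; [exact: cvg_cst | exact: (cvgD hA hB)].
by move: H; rewrite !mulr0 addr0 mulr0.
Qed.
Theorem proposition5 (R : realType) (eta NNS : R) :
  0 < eta < 1 -> 0 < NNS ->
  exists L : R,
    (totalQFI eta NNS M @[M --> +oo] --> L) /\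
    sup [set totalQFI eta NNS M | M in [set M : R | 1 <= M]]
      = Num.max (totalQFI eta NNS 1) L.
Proof.
move=> he N0.
have k0 : 0 <= Bfun eta 0 by have [] := @B_facts _ eta 0 he (lexx 0).
have N4 : 0 < 4 * NNS by rewrite mulr_gt0.
set L := 4 * NNS * Num.max 1 (Bfun eta 0).
have kL : 4 * NNS * Bfun eta 0 <= L by rewrite /L ler_pM2l // le_max lexx orbT.
exists L.
have hQ : totalQFI eta NNS M @[M --> +oo] --> L.
  have hm : (fun M => L - hfun eta NNS M) @ +oo --> L - 0.
    by apply: cvgB; [exact: cvg_cst | exact: h_cvg].
  have hp : (fun M => L + hfun eta NNS M) @ +oo --> L + 0.
    by apply: cvgD; [exact: cvg_cst | exact: h_cvg].
  rewrite subr0 in hm; rewrite addr0 in hp.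
  apply: (squeeze_cvgr _ hm hp).
  exists 0; split => // M M0.
  by have [_ [h1 h2]] := @Q_bounds _ eta NNS M he N0 M0; rewrite h1 h2.
split => //.
have [hasS1 _] := @Q_bounds _ eta NNS 1 he N0 ltr01.
have Q1b : forall M, 1 <= M -> totalQFI eta NNS M <= Num.max (totalQFI eta NNS 1) L.
  move=> M M1.
  have M0 : 0 < M by apply: lt_le_trans M1.
  apply: ge_sup.
    by exists (M * QFI eta (NNS / M) 0); exists 0 => //; rewrite /= lexx ler01.
  move=> y [xi /andP[x0 x1] <-]; rewrite elem_eq //.
  have x0' : 0 <= xi * (NNS / M) by apply: mulr_ge0 => //; rewrite divr_ge0 // ltW.
  have xi'0 : 0 <= xi / M by rewrite divr_ge0 // ltW.
  have xi'le : xi / M <= xi by rewrite ler_pdivrMr //; nra.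
  have := @P_key _ eta (xi * (NNS / M)) xi (xi / M) he x0' xi'0 xi'le x1.
  rewrite le_max => /orP [hP|hP].
    have inS : [set 1 * QFI eta (NNS / 1) xi | xi in [set xi : R | 0 <= xi <= 1]]
        (4 * NNS * Pfun eta (xi * (NNS / M)) (xi / M)).
      exists (xi / M); first by rewrite /= xi'0 (le_trans xi'le x1).
      rewrite elem_eq //; congr (_ * Pfun _ _ _).
      by rewrite divr1 mulrA mulrAC.
    have h1 := ub_le_sup hasS1 inS.
    apply: le_trans _ (_ : totalQFI eta NNS 1 <= _); last by rewrite le_max lexx.
    apply: le_trans h1; by rewrite ler_pM2l.
  apply: le_trans _ (_ : L <= _); last by rewrite le_max lexx orbT.
  apply: le_trans kL; by rewrite ler_pM2l.
set T := [set totalQFI eta NNS M | M in [set M : R | 1 <= M]].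
have hasT : has_ubound T.
  by exists (Num.max (totalQFI eta NNS 1) L) => y [M M1 <-]; apply: Q1b.
apply/le_anti/andP; split.
  apply: ge_sup; first by exists (totalQFI eta NNS 1); exists 1 => //=.
  by move=> y [M M1 <-]; apply: Q1b.
rewrite ge_max; apply/andP; split.
  have m1 : T (totalQFI eta NNS 1) by exists 1 => //=.
  by have := ub_le_sup hasT m1.
rewrite -(cvg_lim _ hQ) //.
apply: limr_le; first by apply/cvg_ex; exists L.
exists 1; split => // M M1.
have mM : T (totalQFI eta NNS M) by exists M => //=; exact: ltW.
by have := ub_le_sup hasT mM.
Qed.
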